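(* Let $U\in C([0,1])\cap C^1((0,1])\cap C^2((0,1))$ satisfy $U''>0$ on $(0,1)$, $\lim_{h\downarrow0}U'(h)=-\infty$, and $r\mapsto rU''(r)$ non-decreasing on $(0,1)$. Let $\widetilde a,a>0$ with $\widetilde a<a\le1$. Suppose that for some integer $K\ge3$ there exists $\kappa>0$ such that $D_U(\widetilde a z,\widetilde a w)=\kappa D_U(az,aw)$ for all $z,w\in\mathcal{P}_K$. Then there exist $\mu_0,\mu_1\in\mathbb{R}$ and $\lambda>0$ such that $U(r)=\lambda r\log r+\mu_1r+\mu_0$ for all $r\in(0,a]$.
   Context: $\mathcal{P}_K=\{z\in\mathbb{R}^K: z_k\ge0,\sum_kz_k=1\}$. $d_U(r,r_0)=U(r)-U(r_0)-(r-r_0)U'(r_0)$ for $r\in[0,1]$, $r_0\in(0,1]$, extended by $d_U(r,0)=\lim_{r_0\downarrow0}d_U(r,r_0)\in[0,\infty]$. For $b\in(0,1]$ and $z,w\in\mathcal{P}_K$, $D_U(bz,bw)=\sum_k d_U(bz_k,bw_k)$. *)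

(* Defs.v *)
From Stdlib Require Import Reals.
From Coquelicot Require Import Coquelicot.
Open Scope R_scope.

(* The probability simplex P_K, vectors represented as z : nat -> R,
   with coordinates z 0, ..., z (K-1). *)
Definition simplex (K : nat) (z : nat -> R) : Prop :=
  (forall k, (k < K)%nat -> 0 <= z k) /\ sum_n_m z 0 (K - 1) = 1.

(* d_U(r, r0) with Up playing the role of U'.  For r0 > 0 it is the finite
   Bregman-type value; for r0 = 0 it is the (right) limit r0 -> 0+,
   taken along the sequence 1/(n+1) (which equals the right limit whenever
   the latter exists in [0, +oo]). *)
Definition dU (U Up : R -> R) (r r0 : R) : Rbar :=
  if Rlt_dec 0 r0 then Finite (U r - U r0 - (r - r0) * Up r0)
  else Lim_seq (fun n => U r - U (/ INR (S n)) - (r - / INR (S n)) * Up (/ INR (S n))).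

Fixpoint Rbar_sum (f : nat -> Rbar) (K : nat) : Rbar :=
  match K with
  | O => Finite 0
  | S K' => Rbar_plus (Rbar_sum f K') (f K')
  end.

Definition DU (U Up : R -> R) (K : nat) (b : R) (z w : nat -> R) : Rbar :=
  Rbar_sum (fun k => dU U Up (b * z k) (b * w k)) K.

(* Main.v *)
Require Import Defs.
From Stdlib Require Import Reals Lra Lia Psatz.
From Coquelicot Require Import Coquelicot.
Open Scope R_scope.

Fixpoint Rsum (f : nat -> R) (n : nat) : R :=
  match n with O => 0 | S n' => Rsum f n' + f n' end.

Definition dd (U Up : R -> R) (b u v : R) := U (b*u) - U (b*v) - (b*u - b*v) * Up (b*v).

Lemma DU_fin U Up K b z w : (forall k, (k < K)%nat -> 0 < b * w k) ->
  DU U Up K b z w = Finite (Rsum (fun k => dd U Up b (z k) (w k)) K).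
Proof.
  unfold DU. induction K as [|K IH]; intros H; simpl. reflexivity.
  rewrite IH by (intros; apply H; lia). unfold dU.
  destruct (Rlt_dec 0 (b * w K)) as [h|h]. reflexivity.
  exfalso; apply h, H; lia.
Qed.

Lemma sum_Rsum (f : nat -> R) n : sum_n_m f 0 n = Rsum f (S n).
Proof.
  induction n. rewrite sum_n_n. simpl. ring.
  rewrite sum_n_Sm by lia. rewrite IHn. simpl. reflexivity.
Qed.

Lemma Rsum_tail (f : nat -> R) c n : (2 <= n)%nat -> (forall k, (2 <= k)%nat -> f k = c) ->
  Rsum f n = f 0%nat + f 1%nat + (INR n - 2) * c.
Proof.
  intros Hn Hf. induction n as [|n IH]. lia.
  destruct (Nat.eq_dec n 1). subst. simpl. ring.
  simpl Rsum. assert (h2 : (2 <= n)%nat) by lia. rewrite (IH h2). rewrite (Hf n h2). rewrite S_INR. ring.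
Qed.

Definition zv (x y t c : R) (k : nat) : R :=
  match k with O => x + t | 1%nat => y - t | _ => c end.

Lemma zv_simplex K x y t : (3 <= K)%nat -> 0 < x + t -> 0 < y - t -> x + y < 1 ->
  simplex K (zv x y t ((1 - x - y) / (INR K - 2))).
Proof.
  intros HK H1 H2 H3.
  assert (HK' : 3 <= INR K) by (replace 3 with (INR 3) by (simpl; ring); apply le_INR; lia).
  split.
  - intros [|[|k]] _; simpl; try lra. apply Rdiv_le_0_compat; lra.
  - replace (K - 1)%nat with (Nat.pred K) by lia.
    rewrite sum_Rsum. rewrite Nat.succ_pred_pos by lia.
    rewrite (Rsum_tail _ ((1 - x - y) / (INR K - 2))) by (try lia; intros [|[|k]] Hk; simpl; lia || reflexivity).
    simpl. field. lra.
Qed.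

Lemma Rsum_two (f : nat -> R) n : (2 <= n)%nat -> (forall k, (2 <= k)%nat -> f k = 0) ->
  Rsum f n = f 0%nat + f 1%nat.
Proof. intros. rewrite (Rsum_tail f 0) by auto. ring. Qed.

Lemma ballR (x e y : R) : ball x e y <-> Rabs (y - x) < e.
Proof. unfold ball; simpl; unfold AbsRing_ball, abs, minus, plus, opp; simpl. tauto. Qed.

Lemma deriv_zero_loc (f : R -> R) (l u t0 d : R) :
  (forall t, l < t < u -> f t = 0) -> l < t0 < u -> is_derive f t0 d -> d = 0.
Proof.
  intros Hf Ht Hd.
  assert (H : is_derive (fun _ => 0) t0 d).
  { apply (is_derive_ext_loc f). 
    assert (Hp : 0 < Rmin (t0 - l) (u - t0)) by (apply Rmin_pos; lra).
    exists (mkposreal _ Hp). intros y Hy. apply ballR in Hy. simpl in Hy.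
    apply Hf. assert (Rmin (t0 - l) (u - t0) <= t0 - l) by apply Rmin_l.
    assert (Rmin (t0 - l) (u - t0) <= u - t0) by apply Rmin_r.
    apply Rabs_def2 in Hy. unfold minus, plus, opp in Hy; simpl in Hy. lra. exact Hd. }
  apply is_derive_unique in H. rewrite Derive_const in H. auto.
Qed.

Lemma deriv_const_int (f : R -> R) (l u x y : R) :
  (forall t, l < t < u -> is_derive f t 0) -> l < x < u -> l < y < u -> f x = f y.
Proof.
  intros Hd Hx Hy.
  destruct (MVT_gen f x y (fun _ => 0)) as [c [Hc Heq]].
  - intros t Ht. apply Hd. 
    assert (Rmin x y > l) by (unfold Rmin; destruct Rle_dec; lra).
    assert (Rmax x y < u) by (unfold Rmax; destruct Rle_dec; lra). lra.
  - intros t Ht. apply continuity_pt_filterlim. apply (ex_derive_continuous (K:=R_AbsRing) (V:=R_NormedModule)).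
    exists 0. apply Hd.
    assert (Rmin x y > l) by (unfold Rmin; destruct Rle_dec; lra).
    assert (Rmax x y < u) by (unfold Rmax; destruct Rle_dec; lra). lra.
  - lra.
Qed.

Lemma Derive_eq (f df : R -> R) p : (forall u, 0 < u < 1 -> is_derive f u (df u)) -> 0 < p < 1 ->
  Derive (fun x0 => f x0) p = df p.
Proof. intros H Hp. apply is_derive_unique. apply H; auto. Qed.

Lemma exd (f df : R -> R) p : (forall u, 0 < u < 1 -> is_derive f u (df u)) -> 0 < p < 1 ->
  ex_derive (fun x0 => f x0) p.
Proof. intros H Hp. exists (df p). apply H; auto. Qed.

Lemma step1 (U Up Upp : R -> R)
  (HU1 : forall x, 0 < x < 1 -> is_derive U x (Up x))
  (HU2 : forall x, 0 < x < 1 -> is_derive Up x (Upp x))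
  (at_ a : R) (Hat : 0 < at_) (Hata : at_ < a) (Ha1 : a <= 1)
  (K : nat) (HK : (3 <= K)%nat) (kappa : R)
  (Heq : forall z w : nat -> R, simplex K z -> simplex K w ->
       DU U Up K at_ z w = Rbar_mult (Finite kappa) (DU U Up K a z w))
  (x y : R) (Hx : 0 < x) (Hy : 0 < y) (Hxy : x + y < 1) :
  (at_^2 * Upp (at_ * x) - kappa * a^2 * Upp (a * x)) +
  (at_^2 * Upp (at_ * y) - kappa * a^2 * Upp (a * y)) = 0.
Proof.
  set (m := Rmin x y).
  assert (Hmx : m <= x) by apply Rmin_l. assert (Hmy : m <= y) by apply Rmin_r.
  assert (Hm : 0 < m) by (apply Rmin_pos; lra).
  set (c := (1 - x - y) / (INR K - 2)).
  set (F := fun t =>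
    (dd U Up at_ (x+t) x + dd U Up at_ (y-t) y) - kappa * (dd U Up a (x+t) x + dd U Up a (y-t) y)).
  assert (HF : forall t, -m < t < m -> F t = 0).
  { intros t Ht.
    assert (Hz := zv_simplex K x y t HK ltac:(lra) ltac:(lra) Hxy).
    assert (Hw := zv_simplex K x y 0 HK ltac:(lra) ltac:(lra) Hxy).
    specialize (Heq _ _ Hz Hw).
    assert (Hc : 0 < c).
    { unfold c. assert (3 <= INR K) by (replace 3 with (INR 3) by (simpl; ring); apply le_INR; lia).
      apply Rdiv_lt_0_compat; lra. }
    rewrite !DU_fin in Heq.
    2,3: intros [|[|k]] _; simpl; fold c; nra.
    simpl in Heq. injection Heq as Heq.
    rewrite !(Rsum_two _ K) in Heq by (try lia; intros [|[|k]] Hk; try lia; simpl; unfold dd; ring).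
    unfold F. simpl in Heq. rewrite Rplus_0_r, Rminus_0_r in Heq. lra. }
  set (F1 := fun t =>
    at_ * Up (at_ * (x + t)) - at_ * Up (at_ * x) - at_ * Up (at_ * (y - t)) + at_ * Up (at_ * y)
    - kappa * (a * Up (a * (x + t)) - a * Up (a * x) - a * Up (a * (y - t)) + a * Up (a * y))).
  assert (HF1 : forall t, -m < t < m -> is_derive F t (F1 t)).
  { intros t Ht. unfold F, dd. auto_derive.
    - repeat split; apply (exd U Up); auto; split; nra.
    - unfold F1. rewrite !(Derive_eq U Up); auto; try (split; nra). unfold Rminus. ring. }
  assert (HF1z : forall t, -m < t < m -> F1 t = 0).
  { intros t Ht. eapply (deriv_zero_loc F (-m) m t); eauto. }
  assert (HF2 : is_derive F1 0 (at_^2 * Upp (at_ * x) - kappa * a^2 * Upp (a * x) +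
    (at_^2 * Upp (at_ * y) - kappa * a^2 * Upp (a * y)))).
  { unfold F1. auto_derive.
    - repeat split; apply (exd Up Upp); auto; split; nra.
    - rewrite !(Derive_eq Up Upp); auto; try (split; nra). unfold Rminus. rewrite Ropp_0, !Rplus_0_r. ring. }
  exact (deriv_zero_loc F1 (-m) m 0 _ HF1z ltac:(lra) HF2).
Qed.

Lemma powq (q : R) n : 0 < q <= 1 -> 0 < q ^ n <= 1.
Proof. intros Hq. induction n; simpl. lra. nra. Qed.

Lemma small_zero (d : R) : (forall eps, 0 < eps -> Rabs d < eps) -> d = 0.
Proof.
  intros H. destruct (Req_dec d 0) as [h|h]; auto.
  assert (Hp := Rabs_pos_lt d h). specialize (H (Rabs d / 2) ltac:(lra)). lra.
Qed.

Lemma endpoint (U f : R -> R) (a : R) : 0 < a <= 1 ->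
  filterlim U (within (fun y => 0 <= y <= 1) (locally a)) (locally (U a)) ->
  continuous f a -> (forall r, 0 < r < a -> U r = f r) -> U a = f a.
Proof.
  intros Ha HU Hf Heq.
  replace (U a) with (U a - f a + f a) by ring.
  rewrite (small_zero (U a - f a)). ring.
  intros eps Heps.
  assert (He2 : 0 < eps / 2) by lra.
  destruct (HU _ (locally_ball (U a) (mkposreal _ He2))) as [d1 Hd1].
  destruct (Hf _ (locally_ball (f a) (mkposreal _ He2))) as [d2 Hd2].
  set (e := Rmin (Rmin d1 d2) a).
  assert (He : 0 < e) by (unfold e; repeat apply Rmin_pos; try apply cond_pos; lra).
  assert (He1 : e <= d1) by (unfold e; eapply Rle_trans; [apply Rmin_l| apply Rmin_l]).
  assert (He2' : e <= d2) by (unfold e; eapply Rle_trans; [apply Rmin_l| apply Rmin_r]).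
  assert (He3 : e <= a) by (unfold e; apply Rmin_r).
  set (y := a - e / 2).
  assert (Hb1 : ball a d1 y).
  { apply ballR. unfold y. rewrite Rabs_left by lra. lra. }
  assert (Hb2 : ball a d2 y).
  { apply ballR. unfold y. rewrite Rabs_left by lra. lra. }
  specialize (Hd1 y Hb1 ltac:(unfold y; lra)). specialize (Hd2 y Hb2).
  apply ballR in Hd1. apply ballR in Hd2. simpl in Hd1, Hd2.
  rewrite (Heq y) in Hd1 by (unfold y; lra).
  replace (U a - f a) with (-(f y - U a) + (f y - f a)) by ring.
  eapply Rle_lt_trans. apply Rabs_triang. rewrite Rabs_Ropp. assert (Hd2x : Rabs (f y - f a) < eps/2) by exact Hd2. assert (Hd1x : Rabs (f y - U a) < eps/2) by exact Hd1. lra.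
Qed.

Theorem proposition4p4
  (U Up Upp : R -> R)
  (HUc : forall x, 0 <= x <= 1 ->
     filterlim U (within (fun y => 0 <= y <= 1) (locally x)) (locally (U x)))
  (HU1 : forall x, 0 < x < 1 -> is_derive U x (Up x))
  (HU1l : filterlim (fun x => (U x - U 1) / (x - 1)) (at_left 1) (locally (Up 1)))
  (HUpc : forall x, 0 < x <= 1 ->
     filterlim Up (within (fun y => 0 < y <= 1) (locally x)) (locally (Up x)))
  (HU2 : forall x, 0 < x < 1 -> is_derive Up x (Upp x))
  (HUppc : forall x, 0 < x < 1 -> continuous Upp x)
  (HUpp_pos : forall x, 0 < x < 1 -> 0 < Upp x)
  (HUp0 : filterlim Up (at_right 0) (Rbar_locally m_infty))
  (Hmono : forall r s, 0 < r -> r <= s -> s < 1 -> r * Upp r <= s * Upp s)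
  (at_ a : R) (Hat : 0 < at_) (Hata : at_ < a) (Ha1 : a <= 1)
  (K : nat) (HK : (3 <= K)%nat)
  (Hkappa : exists kappa : R, 0 < kappa /\
     forall z w : nat -> R, simplex K z -> simplex K w ->
       DU U Up K at_ z w = Rbar_mult (Finite kappa) (DU U Up K a z w)) :
  exists mu0 mu1 lambda : R, 0 < lambda /\
    forall r, 0 < r <= a -> U r = lambda * r * ln r + mu1 * r + mu0.
Proof.
  destruct Hkappa as [kappa [Hk Heq]].
  set (H := fun r => at_^2 * Upp (at_ * r) - kappa * a^2 * Upp (a * r)).
  assert (H0 : forall r, 0 < r < 1 -> H r = 0).
  { intros r Hr. 
    assert (Hs : forall x y, 0 < x -> 0 < y -> x + y < 1 -> H x + H y = 0)
      by (intros; unfold H; apply (step1 U Up Upp HU1 HU2 at_ a Hat Hata Ha1 K HK kappa Heq); auto).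
    destruct (Rlt_dec r (1/2)).
    - specialize (Hs r r ltac:(lra) ltac:(lra) ltac:(lra)). lra.
    - assert (Hy := Hs ((1-r)/2) ((1-r)/2) ltac:(lra) ltac:(lra) ltac:(lra)).
      specialize (Hs r ((1-r)/2) ltac:(lra) ltac:(lra) ltac:(lra)). lra. }
  set (q := at_ / a).
  assert (Hq : 0 < q < 1).
  { unfold q. split. apply Rdiv_lt_0_compat; lra. apply Rmult_lt_reg_r with a. lra.
    field_simplify; lra. }
  set (c := kappa * a / at_).
  assert (Hc : 0 < c) by (unfold c; apply Rdiv_lt_0_compat; nra).
  set (g := fun s => s * Upp s).
  assert (Hg : forall s, 0 < s < a -> g (q * s) = c * g s).
  { intros s Hs. specialize (H0 (s / a) ltac:(split; [apply Rdiv_lt_0_compat; lra|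
      apply Rmult_lt_reg_r with a; [lra| field_simplify; lra]])).
    unfold H in H0. unfold g, q, c.
    replace (a * (s / a)) with s in H0 by (field; lra).
    replace (at_ * (s / a)) with (at_ / a * s) in H0 by (field; lra).
    apply Rmult_eq_reg_l with (at_ ^ 2 * a). 2: apply Rmult_integral_contrapositive; split; try apply pow_nonzero; lra.
    replace (at_ ^ 2 * a * (at_ / a * s * Upp (at_ / a * s))) with (at_ * s * (at_ ^ 2 * Upp (at_ / a * s))) by (field; lra).
    replace (at_ ^ 2 * Upp (at_ / a * s)) with (kappa * a ^ 2 * Upp s) by lra.
    field. lra. }
  assert (Hgn : forall n s, 0 < s < a -> 0 < q ^ n * s < a /\ g (q ^ n * s) = c ^ n * g s).
  { intros n s Hs. induction n.
    - simpl. rewrite !Rmult_1_l. auto.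
    - destruct IHn as [IH1 IH2]. assert (Hp := powq q n ltac:(lra)).
      simpl. rewrite Rmult_assoc, Hg by auto. rewrite IH2. split; nra. }
  assert (Hgpos : forall s, 0 < s < a -> 0 < g s) by (intros; unfold g; apply Rmult_lt_0_compat; try apply HUpp_pos; lra).
  assert (Hstep : forall s, 0 < s < 1 -> Up s - Up (q * s) <= (1 - q) / q * g s).
  { intros s Hs.
    destruct (MVT_gen Up (q * s) s Upp) as [xi [Hxi Heqm]].
    - intros t Ht. apply HU2.
      assert (Rmin (q*s) s >= q * s) by (unfold Rmin; destruct Rle_dec; nra).
      assert (Rmax (q*s) s <= s) by (unfold Rmax; destruct Rle_dec; nra). nra.
    - intros t Ht. apply continuity_pt_filterlim. apply (ex_derive_continuous (K:=R_AbsRing) (V:=R_NormedModule)).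
      exists (Upp t). apply HU2.
      assert (Rmin (q*s) s >= q * s) by (unfold Rmin; destruct Rle_dec; nra).
      assert (Rmax (q*s) s <= s) by (unfold Rmax; destruct Rle_dec; nra). nra.
    - assert (Rmin (q*s) s = q * s) by (unfold Rmin; destruct Rle_dec; nra).
      assert (Rmax (q*s) s = s) by (unfold Rmax; destruct Rle_dec; nra).
      rewrite H1, H2 in Hxi.
      assert (Hxp : 0 < xi) by nra.
      assert (Hm := Hmono xi s Hxp ltac:(lra) ltac:(lra)).
      assert (Hup : 0 < Upp xi) by (apply HUpp_pos; lra).
      rewrite Heqm. unfold g.
      apply Rmult_le_reg_l with (q * xi). nra.
      replace (q * xi * ((1 - q) / q * (s * Upp s))) with ((1 - q) * xi * (s * Upp s)) by (field; lra).
      assert (0 <= (1 - q) * s * Upp s) by (apply Rmult_le_pos; try apply Rlt_le, HUpp_pos; nra).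
      assert (A : (1-q)*q*s*(xi*Upp xi) <= (1-q)*q*s*(s*Upp s)) by (apply Rmult_le_compat_l; nra).
      assert (B : (1-q)*q*s*(s*Upp s) <= (1-q)*xi*(s*Upp s)) by nra.
      replace (q * xi * (Upp xi * (s - q * s))) with ((1-q)*q*s*(xi*Upp xi)) by ring. lra. }
  set (s0 := a / 2).
  assert (Hs0 : 0 < s0 < a) by (unfold s0; lra).
  assert (Hc1 : c <= 1).
  { assert (h1 := Hg s0 Hs0). assert (h2 := Hgpos s0 Hs0).
    assert (h3 : g (q * s0) <= g s0) by (unfold g; apply Hmono; nra).
    nra. }
  assert (Hc2 : c = 1).
  { destruct (Rlt_dec c 1) as [hc|hc]; [exfalso|lra].
    set (M := (1 - q) / q * g s0).
    assert (HM : 0 <= M) by (unfold M; apply Rmult_le_pos; [apply Rdiv_le_0_compat|apply Rlt_le, Hgpos]; lra).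
    assert (Hb : forall n, Up (q ^ n * s0) >= Up s0 - M * (1 - c ^ n) / (1 - c)).
    { induction n.
      - simpl. rewrite Rmult_1_l. unfold Rdiv. rewrite Rminus_diag, Rmult_0_r, Rmult_0_l. lra.
      - destruct (Hgn n s0 Hs0) as [h1 h2].
        assert (h3 := Hstep (q ^ n * s0) ltac:(lra)).
        simpl pow. rewrite Rmult_assoc. rewrite h2 in h3.
        assert (E : M * (1 - c * c ^ n) / (1 - c) = M * (1 - c ^ n) / (1 - c) + (1 - q) / q * (c ^ n * g s0))
          by (unfold M; field; lra).
        rewrite E. lra. }
    set (L := Up s0 - M / (1 - c) - 1).
    assert (HL : at_right 0 (fun x => Up x < L)).
    { apply (HUp0 (fun v => v < L)). exists L. auto. }
    destruct HL as [d Hd].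
    assert (Hq' : Rabs q < 1) by (rewrite Rabs_pos_eq; lra).
    destruct (pow_lt_1_zero q Hq' (d / s0) ltac:(apply Rdiv_lt_0_compat; [apply cond_pos|lra])) as [N HN].
    specialize (HN N (le_n N)).
    assert (Hp := powq q N ltac:(lra)).
    rewrite Rabs_pos_eq in HN by lra.
    assert (Hy : ball 0 d (q ^ N * s0)).
    { apply ballR. rewrite Rminus_0_r, Rabs_pos_eq by nra.
      apply Rmult_lt_compat_r with (r := s0) in HN; [|lra]. unfold Rdiv in HN.
      rewrite Rmult_assoc, Rinv_l, Rmult_1_r in HN by lra. exact HN. }
    specialize (Hd _ Hy ltac:(nra)).
    specialize (Hb N).
    assert (Hcn : 0 < c ^ N) by (apply pow_lt; lra).
    assert (M * (1 - c ^ N) / (1 - c) <= M / (1 - c)).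
    { unfold Rdiv. apply Rmult_le_compat_r. apply Rlt_le, Rinv_0_lt_compat; lra. nra. }
    unfold L in Hd. lra. }
  assert (Hgn1 : forall n s, 0 < s < a -> 0 < q ^ n * s < a /\ g (q ^ n * s) = g s).
  { intros n s0' h. destruct (Hgn n s0' h) as [h1 h2]. rewrite h2, Hc2, pow1. split; auto; ring. }
  assert (Hconst : forall s t, 0 < s < a -> 0 < t < a -> g t <= g s).
  { intros s t Hs Ht. destruct (Rle_dec t s).
    - unfold g. apply Hmono; lra.
    - assert (Hq' : Rabs q < 1) by (rewrite Rabs_pos_eq; lra).
      destruct (pow_lt_1_zero q Hq' (s / t) ltac:(apply Rdiv_lt_0_compat; lra)) as [N HN].
      specialize (HN N (le_n N)). rewrite Rabs_pos_eq in HN by (apply Rlt_le, pow_lt; lra).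
      destruct (Hgn1 N t Ht) as [h1 h2]. rewrite <- h2.
      unfold g. apply Hmono; try lra.
      apply Rmult_lt_compat_r with (r := t) in HN; [|lra]. unfold Rdiv in HN.
      rewrite Rmult_assoc, Rinv_l, Rmult_1_r in HN by lra. lra. }
  set (lam := g s0).
  assert (Hlam : 0 < lam) by (apply Hgpos; auto).
  assert (HUppe : forall s, 0 < s < a -> Upp s = lam / s).
  { intros s Hs. assert (g s = lam) by (apply Rle_antisym; apply Hconst; auto).
    unfold g in H1. rewrite <- H1. field. lra. }
  set (V1 := fun r => Up r - lam * (ln r + 1)).
  assert (HV1 : forall r, 0 < r < a -> is_derive V1 r 0).
  { intros r Hr. unfold V1. auto_derive.
    - split. apply (exd Up Upp); auto; lra. split; [lra|auto].
    - rewrite (Derive_eq Up Upp) by (auto; lra). rewrite HUppe by auto. field. lra. }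
  set (mu1 := V1 s0).
  set (W := fun r => U r - lam * r * ln r - mu1 * r).
  assert (HW : forall r, 0 < r < a -> is_derive W r 0).
  { intros r Hr. unfold W. auto_derive.
    - split. apply (exd U Up); auto; lra. split; [lra|auto].
    - rewrite (Derive_eq U Up) by (auto; lra).
      assert (V1 r = mu1) by (apply (deriv_const_int V1 0 a); auto).
      unfold V1 in H1. 
      replace (Up r) with (mu1 + lam * (ln r + 1)) by lra. field. lra. }
  set (mu0 := W s0).
  exists mu0, mu1, lam. split; auto.
  assert (Hin : forall r, 0 < r < a -> U r = lam * r * ln r + mu1 * r + mu0).
  { intros r Hr. assert (W r = mu0) by (apply (deriv_const_int W 0 a); auto).
    unfold W in H1. lra. }
  intros r Hr. destruct (Rlt_dec r a) as [hr|hr]. apply Hin; lra.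
  replace r with a by lra.
  apply (endpoint U (fun r => lam * r * ln r + mu1 * r + mu0) a ltac:(lra) (HUc a ltac:(lra))).
  - apply (ex_derive_continuous (K:=R_AbsRing) (V:=R_NormedModule)). auto_derive. lra.
  - exact Hin.
Qed.
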